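(* Let $\Omega$ be a thick Euclidean building and $|\Omega|$ its geometric realisation, equipped with its canonical affine structure. Then every affine functional $a:|\Omega|\to\mathbb R$ is constant.
   Context: A Euclidean building is a building (simplicial complex with a system of apartments satisfying the building axioms) whose apartments are Euclidean Coxeter complexes; it is thick if every codimension-one face lies in at least three chambers. The geometric realisation carries the affine structure obtained by pulling back the affine structure of the affine reflection group to each apartment. A map $a:|\Omega|\to\mathbb R$ is an affine functional if $a(tx+(1-t)y)=ta(x)+(1-t)a(y)$ for all $x,y\in|\Omega|$ and $t\in[0,1]$. *)

(* Defs.v *)
From HB Require Import structures.
From mathcomp Require Import all_boot all_order all_algebra.
From mathcomp Require Import finmap.
From mathcomp Require Import boolp classical_sets cardinality reals.

Set Implicit Arguments.
Unset Strict Implicit.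
Unset Printing Implicit Defensive.

Import Order.TTheory GRing.Theory Num.Theory.
Local Open Scope ring_scope.
Local Open Scope classical_set_scope.

Section Coxeter.
Variables (R : realType) (n : nat).
Implicit Types (x y z : 'rV[R]_n) (h : 'rV[R]_n * R) (H : set ('rV[R]_n * R)).

Definition dotv x y : R := \sum_(i < n) x ord0 i * y ord0 i.

Definition side h x : R := dotv h.1 x - h.2.
Definition hplane h : set 'rV[R]_n := [set x | side h x = 0].
Definition reflect_in h x : 'rV[R]_n := x - ((2 * side h x) / dotv h.1 h.1) *: h.1.

(* H is the set of reflecting hyperplanes of an affine (Euclidean) reflection
   group W (= the group generated by the reflections in the hyperplanes of H):
   nondegenerate, stable under the reflections, locally finite (W discrete). *)
Definition affine_reflection_arrangement H : Prop :=
  [/\ (forall h, H h -> h.1 != 0),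
      (forall h h', H h -> H h' ->
         exists h'', H h'' /\ hplane h'' = reflect_in h @` hplane h') &
      (forall x (r : R), finite_set
         (hplane @` [set h | H h /\ exists y, hplane h y /\ dotv (y - x) (y - x) <= r]))].

(* closed cell (closure of the face of the arrangement) containing x *)
Definition closedcell H x : set 'rV[R]_n :=
  [set y | forall h, H h ->
     [/\ side h x = 0 -> side h y = 0,
         0 < side h x -> 0 <= side h y &
         side h x < 0 -> side h y <= 0]].

Definition cox_vertex H z : Prop := closedcell H z = [set z].

Definition convex_hull (S : seq 'rV[R]_n) : set 'rV[R]_n :=
  [set z | exists lam : nat -> R, (forall i, 0 <= lam i) /\
     \sum_(i < size S) lam i = 1 /\ z = \sum_(i < size S) lam i *: S`_i].

Definition aff_indep (S : seq 'rV[R]_n) : Prop :=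
  forall lam : nat -> R, \sum_(i < size S) lam i = 0 ->
    \sum_(i < size S) lam i *: S`_i = 0 -> forall i, (i < size S)%N -> lam i = 0.

Definition simplicial_arrangement H : Prop :=
  forall x, exists S : seq 'rV[R]_n, [/\ uniq S, aff_indep S,
     closedcell H x = convex_hull S &
     forall z, (closedcell H x z /\ cox_vertex H z) <-> z \in S].

(* simplices of the Coxeter complex: vertex sets of faces of closed cells *)
Definition cox_simplex H (P : set 'rV[R]_n) : Prop :=
  exists x, forall z, P z -> closedcell H x z /\ cox_vertex H z.

End Coxeter.

Section Building.
Variable V : choiceType.
Local Open Scope fset_scope.
Implicit Types (K D S : set {fset V}).

Definition complex K : Prop := forall s t, K s -> fsubset t s -> K t.
Definition cvertex K (v : V) : Prop := K [fset v].

Definition cx_iso K K' (f : V -> V) : Prop :=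
  [/\ (forall v w, cvertex K v -> cvertex K w -> f v = f w -> v = w),
      (forall v', cvertex K' v' -> exists v, cvertex K v /\ f v = v') &
      (forall s : {fset V}, (forall v, v \in s -> cvertex K v) ->
         (K s <-> K' [fset f v | v in s]))].

Definition cox_iso (R : realType) (n : nat) (H : set ('rV[R]_n * R)) K
  (psi : V -> 'rV[R]_n) : Prop :=
  [/\ (forall v w, cvertex K v -> cvertex K w -> psi v = psi w -> v = w),
      (forall z, cox_vertex H z -> exists v, cvertex K v /\ psi v = z) &
      (forall s : {fset V}, (forall v, v \in s -> cvertex K v) ->
         (K s <-> cox_simplex H (psi @` [set v | v \in s])))].

Definition chamber D (C : {fset V}) : Prop :=
  D C /\ forall s, D s -> fsubset C s -> s = C.

Definition panel D (P : {fset V}) : Prop :=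
  D P /\ exists C, [/\ chamber D C, fsubset P C & #|` C| = (#|` P|).+1]%N.

Definition thick D : Prop :=
  forall P, panel D P -> exists C1 C2 C3,
    [/\ chamber D C1, chamber D C2, chamber D C3,
        fsubset P C1 /\ fsubset P C2 /\ fsubset P C3 &
        [/\ C1 != C2, C1 != C3 & C2 != C3]].

(* D is a building with apartment system A, whose apartments are Euclidean
   Coxeter complexes of the affine reflection group with hyperplanes H *)
Definition euclidean_building (R : realType) (n : nat) (H : set ('rV[R]_n * R))
  D (A : set (set {fset V})) : Prop :=
  [/\ affine_reflection_arrangement H /\ simplicial_arrangement H, complex D,
      (forall S, A S -> [/\ complex S, (forall s, S s -> D s) &
                            exists psi, cox_iso H S psi]),
      (forall s t, D s -> D t -> exists S, [/\ A S, S s & S t]) &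
      (forall S S' C, A S -> A S' -> chamber D C -> S C -> S' C ->
         exists f, cx_iso S S' f /\
                   forall v, cvertex S v -> cvertex S' v -> f v = v)].

(* geometric realisation: finitely supported barycentric weight functions
   supported on a simplex *)
Definition realpt (R : realType) D (p : V -> R) : Prop :=
  exists s, [/\ D s, (forall v, v \notin s -> p v = 0), (forall v, 0 <= p v) &
               \sum_(v <- s) p v = 1].

Definition realisation (R : realType) D := {p : V -> R | realpt D p}.

(* the point p of |S| has position z in R^n under the identification psi *)
Definition located (R : realType) (n : nat) (S : set {fset V}) (psi : V -> 'rV[R]_n)
  (p : V -> R) (z : 'rV[R]_n) : Prop :=
  exists s, [/\ S s, (forall v, v \notin s -> p v = 0) &
               z = \sum_(v <- s) p v *: psi v].

(* affine functional for the affine structure pulled back to each apartment *)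
Definition affine_functional (R : realType) (n : nat) (H : set ('rV[R]_n * R))
  D (A : set (set {fset V})) (a : realisation R D -> R) : Prop :=
  forall S psi, A S -> cox_iso H S psi ->
  forall (x y w : realisation R D) (zx zy : 'rV[R]_n) (t : R),
    (0 <= t <= 1)%R ->
    located S psi (sval x) zx -> located S psi (sval y) zy ->
    located S psi (sval w) (t *: zx + (1 - t) *: zy)%R ->
    a w = (t * a x + (1 - t) * a y)%R.

Arguments located [R n] S psi p z.
End Building.

(* Main.v *)
Require Import Defs.
From HB Require Import structures.
From mathcomp Require Import all_boot all_order all_algebra.
From mathcomp Require Import finmap.
From mathcomp Require Import boolp classical_sets cardinality reals.
From mathcomp Require Import ring lra.

Section Helpers.
Local Set Implicit Arguments.
Local Unset Strict Implicit.
Local Unset Printing Implicit Defensive.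
Import Order.TTheory GRing.Theory Num.Theory.
Local Open Scope ring_scope.
Local Open Scope classical_set_scope.
Section Lin.
Variables (R : realType) (n : nat).
Implicit Types (x y z u v : 'rV[R]_n).

Lemma dotvC x y : dotv x y = dotv y x.
Proof. by apply: eq_bigr => i _; rewrite mulrC. Qed.

Lemma dotvDl x y z : dotv (x + y) z = dotv x z + dotv y z.
Proof. by rewrite /dotv -big_split; apply: eq_bigr => i _; rewrite !mxE mulrDl. Qed.

Lemma dotvZl (c : R) x y : dotv (c *: x) y = c * dotv x y.
Proof. by rewrite /dotv mulr_sumr; apply: eq_bigr => i _; rewrite !mxE mulrA. Qed.

Lemma dotvNl x y : dotv (- x) y = - dotv x y.
Proof. by rewrite -scaleN1r dotvZl mulN1r. Qed.

Lemma dotvBl x y z : dotv (x - y) z = dotv x z - dotv y z.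
Proof. by rewrite dotvDl dotvNl. Qed.

Lemma dotv0l y : dotv 0 y = 0.
Proof. by rewrite -(scale0r 0) dotvZl mul0r. Qed.

Lemma dotvDr x y z : dotv z (x + y) = dotv z x + dotv z y.
Proof. by rewrite !(dotvC z) dotvDl. Qed.
Lemma dotvZr (c : R) x y : dotv y (c *: x) = c * dotv y x.
Proof. by rewrite !(dotvC y) dotvZl. Qed.
Lemma dotvNr x y : dotv y (- x) = - dotv y x.
Proof. by rewrite !(dotvC y) dotvNl. Qed.
Lemma dotvBr x y z : dotv z (x - y) = dotv z x - dotv z y.
Proof. by rewrite !(dotvC z) dotvBl. Qed.
Lemma dotv0r y : dotv y 0 = 0.
Proof. by rewrite dotvC dotv0l. Qed.

Lemma dotv_suml (I : Type) (r : seq I) (P : pred I) (F : I -> 'rV[R]_n) y :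
  dotv (\sum_(i <- r | P i) F i) y = \sum_(i <- r | P i) dotv (F i) y.
Proof.
elim/big_rec2: _ => [|i a b _ <-]; first by rewrite dotv0l.
by rewrite dotvDl.
Qed.

Lemma dotv_sumr (I : Type) (r : seq I) (P : pred I) (F : I -> 'rV[R]_n) y :
  dotv y (\sum_(i <- r | P i) F i) = \sum_(i <- r | P i) dotv y (F i).
Proof. rewrite dotvC dotv_suml; apply: eq_bigr => i _; by rewrite dotvC. Qed.

Lemma dotv_ge0 x : 0 <= dotv x x.
Proof. by apply: sumr_ge0 => i _; rewrite -expr2 sqr_ge0. Qed.

Lemma dotv_eq0 x : dotv x x = 0 -> x = 0.
Proof.
move=> /eqP; rewrite psumr_eq0; last by move=> i _; rewrite -expr2 sqr_ge0.
move=> /allP H; apply/rowP => i; rewrite mxE.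
have := H i (mem_index_enum i); rewrite /= -expr2 sqrf_eq0 => /eqP.
by [].
Qed.
End Lin.

Section Side.
Variables (R : realType) (n : nat).
Implicit Types (x y z u v : 'rV[R]_n) (h : 'rV[R]_n * R).

Lemma sideE h x : side h x = dotv h.1 x - h.2.
Proof. by []. Qed.

Lemma side_comb h k (lam : nat -> R) (p : nat -> 'rV[R]_n) :
  \sum_(i < k) lam i = 1 ->
  side h (\sum_(i < k) lam i *: p i) = \sum_(i < k) lam i * side h (p i).
Proof.
move=> Hs; rewrite /side dotv_sumr.
under [RHS]eq_bigr => i _ do rewrite mulrBr.
rewrite sumrB -mulr_suml Hs mul1r; congr (_ - _).
by apply: eq_bigr => i _; rewrite dotvZr.
Qed.

Lemma side_line h x u (t : R) : side h (x + t *: u) = side h x + t * dotv h.1 u.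
Proof. by rewrite /side dotvDr dotvZr; ring. Qed.

Definition refl h x := x - ((2 * side h x) / dotv h.1 h.1) *: h.1.

Lemma reflE h x : reflect_in h x = refl h x.
Proof. by []. Qed.

Lemma dotv_neq0 x : x != 0 -> dotv x x != 0.
Proof. by apply: contra => /eqP/dotv_eq0 ->. Qed.

Lemma dotv_gt0 x : x != 0 -> 0 < dotv x x.
Proof. by move=> H; rewrite lt_def dotv_neq0 // dotv_ge0. Qed.

Lemma side_refl h x : h.1 != 0 -> side h (refl h x) = - side h x.
Proof.
move=> H; rewrite /refl /side dotvBr dotvZr.
have := dotv_neq0 H; set d := dotv h.1 h.1 => Hd.
field; done.
Qed.

Lemma refl_invol h x : h.1 != 0 -> refl h (refl h x) = x.
Proof.
move=> H; rewrite {1}/refl side_refl // mulrN mulNr scaleNr opprK /refl subrK.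
by [].
Qed.

Lemma refl_fix h x : side h x = 0 -> refl h x = x.
Proof. by move=> H; rewrite /refl H mulr0 mul0r scale0r subr0. Qed.

Lemma side_refl_other h h' x :
  side h' (refl h x) =
  dotv (h'.1 - (2 * dotv h'.1 h.1 / dotv h.1 h.1) *: h.1) x
   - (h'.2 - (2 * dotv h'.1 h.1 / dotv h.1 h.1) * h.2).
Proof.
rewrite /refl /side dotvBr dotvZr dotvBl dotvZl.
ring.
Qed.

Lemma refl_comb h k (lam : nat -> R) (p : nat -> 'rV[R]_n) :
  \sum_(i < k) lam i = 1 ->
  refl h (\sum_(i < k) lam i *: p i) = \sum_(i < k) lam i *: refl h (p i).
Proof.
move=> Hs; rewrite /refl side_comb //.
under [RHS]eq_bigr => i _ do rewrite scalerBr scalerA.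
rewrite sumrB; congr (_ - _).
rewrite mulr_sumr mulr_suml scaler_suml; apply: eq_bigr => i _.
by congr (_ *: _); ring.
Qed.

Lemma same_zero_prop (a b : 'rV[R]_n) (c d : R) : a != 0 ->
  (forall x, dotv a x = c <-> dotv b x = d) ->
  exists mu : R, mu != 0 /\ forall x, dotv b x - d = mu * (dotv a x - c).
Proof.
move=> Ha Hiff.
have Hd := dotv_neq0 Ha; set A := dotv a a in Hd.
pose x0 := (c / A) *: a.
have Hx0 : dotv a x0 = c by rewrite dotvZr -/A; field.
have Hbx0 : dotv b x0 = d by apply/Hiff.
have Hker : forall v, dotv a v = 0 -> dotv b v = 0.
  move=> v Hv; have : dotv a (x0 + v) = c by rewrite dotvDr Hx0 Hv addr0.
  by move/Hiff; rewrite dotvDr Hbx0 => HH; lra.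
pose mu := dotv b a / A.
have Hw : dotv a (b - mu *: a) = 0.
  by rewrite dotvBr dotvZr -/A /mu (dotvC a b); field.
have Hbw := Hker _ Hw.
have Hww : dotv (b - mu *: a) (b - mu *: a) = 0.
  by rewrite dotvBl dotvZl Hw Hbw mulr0 subr0.
have Hb : b = mu *: a by apply/eqP; rewrite -subr_eq0; apply/eqP/dotv_eq0.
have Hdd : d = mu * c by rewrite -Hbx0 Hb dotvZl Hx0.
exists mu; split; last by move=> x; rewrite Hb dotvZl Hdd mulrBr.
apply/negP => /eqP Hmu.
have : dotv b (x0 + a) = d by rewrite Hb Hmu scale0r dotv0l Hdd Hmu mul0r.
move/Hiff; rewrite dotvDr Hx0 -/A => /eqP; rewrite -subr_eq0 addrC addKr.
by rewrite (negbTE Hd).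
Qed.
End Side.

Section Small.
Variable (R : realType).
Lemma exists_small (T : Type) (l : seq T) (P : T -> R -> Prop) :
  (forall b e e', P b e -> 0 < e' -> e' <= e -> P b e') ->
  (forall b, List.In b l -> exists2 e, 0 < e & P b e) ->
  exists2 e, 0 < e & forall b, List.In b l -> P b e.
Proof.
move=> Hdown; elim: l => [|b l IH] Hl; first by exists 1.
have [e1 He1 Pe1] := Hl b (or_introl erefl).
have [e2 He2 Pe2] := IH (fun b' Hb' => Hl b' (or_intror Hb')).
exists (Num.min e1 e2); first by rewrite lt_min He1 He2.
move=> b' [<-|Hb']; first by apply: (Hdown _ e1) => //; rewrite ?lt_min ?He1 ?He2 // ge_min lexx.
apply: (Hdown _ e2); [exact: Pe2|by rewrite lt_min He1 He2|by rewrite ge_min lexx orbT].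
Qed.
End Small.

Section Arr.
Variables (R : realType) (n : nat) (H : set ('rV[R]_n * R)).
Hypothesis HA : affine_reflection_arrangement H.
Implicit Types (x y z u v w : 'rV[R]_n) (h : 'rV[R]_n * R).

Lemma HA_nz h : H h -> h.1 != 0.
Proof. by case: HA => A _ _; apply: A. Qed.

Lemma reps_exist (s : seq (set 'rV[R]_n)) :
  (forall W, W \in s -> exists h, H h /\ hplane h = W) ->
  exists L : seq ('rV[R]_n * R), (forall h, List.In h L -> H h) /\
     forall W, W \in s -> exists2 h', List.In h' L & hplane h' = W.
Proof.
elim: s => [|W s IH] Hs; first by exists [::]; split => // W.
have [L [HL1 HL2]] := IH (fun W' HW' => Hs W' (ltac:(by rewrite in_cons HW' orbT))).
have [h [Hh HhW]] := Hs W (mem_head _ _).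
exists (h :: L); split; first by move=> h' [<-|/HL1].
move=> W'; rewrite in_cons => /orP [/eqP ->|/HL2 [h' Hh' E]].
  by exists h => //; left.
by exists h' => //; right.
Qed.

Lemma local_family x : exists L : seq ('rV[R]_n * R),
  (forall h, List.In h L -> H h) /\
  forall h, H h -> forall y, hplane h y -> dotv (y - x) (y - x) <= 1 ->
     exists2 h', List.In h' L & hplane h' = hplane h.
Proof.
case: HA => _ _ /(_ x 1) /finite_seqP [s Hs].
have Hs' : forall W, W \in s -> exists h, H h /\ hplane h = W.
  move=> W HW; have : [set` s] W by [].
  by rewrite -Hs => -[h [Hh _] <-]; exists h.
have [L [HL1 HL2]] := reps_exist Hs'.
exists L; split => // h Hh y Hy Hyx.
have : [set` s] (hplane h) by rewrite -Hs; exists h => //; split => //; exists y.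
by move=> /= /HL2.
Qed.

Lemma seg x u : exists t, [/\ 0 < t, t <= 1, t * t * dotv u u <= 1 &
  forall h, H h -> side h x != 0 ->
  forall s, 0 <= s <= t -> 0 < side h x * side h (x + s *: u)].
Proof.
have [L [HL1 HL2]] := local_family x.
have [e He Pe] : exists2 e : R, 0 < e & forall b, List.In b L ->
   (side b x != 0 -> e * `|dotv b.1 u| < `|side b x|).
  apply: exists_small => [b e e' P He' Hle Hb|b _].
    by apply: le_lt_trans (P Hb); rewrite ler_wpM2r.
  have [Hb|Hb] := eqVneq (side b x) 0.
    by exists 1 => //; rewrite Hb eqxx.
  exists (`|side b x| / (`|dotv b.1 u| + 1)).
    by rewrite divr_gt0 // ?normr_gt0 // ltr_wpDl.
  move=> _; rewrite mulrAC ltr_pdivrMr ?ltr_wpDl //.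
  by rewrite mulrDr mulr1 ltrDl normr_gt0.
have Hu := dotv_ge0 u.
pose t := Num.min e (1 / (1 + dotv u u)).
have Ht0 : 0 < t by rewrite lt_min He divr_gt0 // ltr_wpDr.
have Hte : t <= e by rewrite ge_min lexx.
have Htu : t * (1 + dotv u u) <= 1.
  have : t <= 1 / (1 + dotv u u) by rewrite ge_min lexx orbT.
  by rewrite ler_pdivlMr ?ltr_wpDr.
exists t; split => //; first by nra.
  have : t * dotv u u <= 1 by nra.
  have : t * (t * dotv u u) <= t * 1 by rewrite ler_wpM2l // ?ltW //; nra.
  nra.
move=> h Hh Hxh s /andP [Hs0 Hst].
rewrite side_line.
set a := side h x in Hxh *; set b := dotv h.1 u.
have Ha2 : 0 < a * a by rewrite lt_def mulf_neq0 // -expr2 sqr_ge0.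
rewrite ltNge; apply/negP => Hneg.
have Hab : a * b < 0 by nra.
have Hb : b != 0 by apply/negP => /eqP Hb; move: Hab; rewrite Hb mulr0 ltxx.
pose s0 := - a / b.
have Hs0b : s0 * b = - a by rewrite /s0 mulrAC -mulrA divff // mulr1.
have Hs0pos : 0 < s0 by nra.
have Hs0s : s0 <= s by nra.
pose p := x + s0 *: u.
have Hp : side h p = 0 by rewrite /p side_line -/a -/b Hs0b addrN.
have Hpx : dotv (p - x) (p - x) <= 1.
  rewrite /p addrC addKr dotvZl dotvZr; nra.
have [h' Hh'L Eh'] := HL2 h Hh p Hp Hpx.
have Hx' : side h' x != 0.
  apply/negP => /eqP Hx0; have : hplane h' x by [].
  by rewrite Eh' => Hx; move: Hxh; rewrite /a Hx eqxx.
have Hp' : side h' p = 0 by have : hplane h p by []; rewrite -Eh'.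
have := Pe h' Hh'L Hx'; move: Hp'; rewrite /p side_line => Hp'.
have -> : side h' x = - (s0 * dotv h'.1 u) by apply/eqP; rewrite -addr_eq0 Hp'.
rewrite normrN normrM (ger0_norm (ltW Hs0pos)) => Hlt.
have : `|dotv h'.1 u| * s0 <= `|dotv h'.1 u| * e.
  by rewrite ler_wpM2l //; apply: (le_trans Hs0s); apply: (le_trans Hst).
nra.
Qed.

Lemma sum_neq0_norm (a b : R) : `|b| < `|a| -> a + b != 0.
Proof.
move=> Hl; apply/negP => /eqP Hab; move: Hl.
have -> : b = - a by apply/eqP; rewrite -addr_eq0 addrC Hab.
by rewrite normrN ltxx.
Qed.

Lemma exists_dir (l : seq ('rV[R]_n * R)) :
  (forall h, List.In h l -> h.1 != 0) ->
  exists u, forall h, List.In h l -> dotv h.1 u != 0.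
Proof.
elim: l => [|a l IH] Hl; first by exists 0.
have [u Hu] := IH (fun h Hh => Hl h (or_intror Hh)).
have [Hau|Hau] := eqVneq (dotv a.1 u) 0; last first.
  by exists u => h [<-|/Hu].
have [e He Pe] : exists2 e : R, 0 < e & forall b, List.In b l ->
   e * `|dotv b.1 a.1| < `|dotv b.1 u|.
  apply: exists_small => [b e e' P He' Hle|b Hb].
    by apply: le_lt_trans P; rewrite ler_wpM2r.
  exists (`|dotv b.1 u| / (`|dotv b.1 a.1| + 1)).
    by rewrite divr_gt0 // ?normr_gt0 ?Hu // ltr_wpDl.
  rewrite mulrAC ltr_pdivrMr ?ltr_wpDl //.
  by rewrite mulrDr mulr1 ltrDl normr_gt0 Hu.
exists (u + e *: a.1) => h [<-|Hh].
  rewrite dotvDr dotvZr Hau add0r mulf_neq0 ?dotv_neq0 //.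
    by rewrite gt_eqF.
  by apply: Hl; left.
rewrite dotvDr dotvZr; apply: sum_neq0_norm.
by rewrite normrM (gtr0_norm He); apply: Pe.
Qed.

Definition generic y := forall h, H h -> side h y != 0.

Lemma gen x : exists y, generic y /\ closedcell H x `<=` closedcell H y.
Proof.
have [L [HL1 HL2]] := local_family x.
have [u Hu] := exists_dir (fun h Hh => HA_nz (HL1 h Hh)).
have [t [Ht0 Ht1 Htu Hseg]] := seg x u.
have Htt : 0 <= t <= t by rewrite lexx ltW.
exists (x + t *: u); split.
  move=> h Hh; apply/negP => /eqP Hy.
  have Hd : dotv (x + t *: u - x) (x + t *: u - x) <= 1.
    by rewrite addrC addKr dotvZl dotvZr mulrA.
  have [h' Hh'L Eh'] := HL2 h Hh _ Hy Hd.
  have Hy' : side h' (x + t *: u) = 0.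
    by have : hplane h (x + t *: u) by []; rewrite -Eh'.
  have [Hx'|Hx'] := eqVneq (side h' x) 0.
    move: Hy'; rewrite side_line Hx' add0r => /eqP.
    by rewrite mulf_eq0 gt_eqF //= (negbTE (Hu _ Hh'L)).
  by have := Hseg h' (HL1 _ Hh'L) Hx' t Htt; rewrite Hy' mulr0 ltxx.
move=> z Hz h Hh; have [Hz1 Hz2 Hz3] := Hz h Hh.
have [Hx|Hx] := eqVneq (side h x) 0.
  by have Hz0 := Hz1 Hx; split => _; rewrite Hz0.
have Hp := Hseg h Hh Hx t Htt.
split => Hy.
- by move: Hp; rewrite Hy mulr0 ltxx.
- by apply: Hz2; nra.
- by apply: Hz3; nra.
Qed.
End Arr.

Section Dim.
Variables (R : realType) (n : nat).

Definition dmx k (p : nat -> 'rV[R]_n) : 'M[R]_(k, n) :=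
  \matrix_(i < k, j < n) (p i.+1 - p 0%N) 0 j.
Arguments dmx : clear implicits.

Lemma dmx_mul k p (v : 'rV[R]_k) :
  v *m dmx k p = \sum_(i < k) v 0 i *: (p i.+1 - p 0%N).
Proof.
rewrite mulmx_sum_row; apply: eq_bigr => i _; congr (_ *: _).
by apply/rowP => j; rewrite !mxE.
Qed.

Lemma indep_core k (p : nat -> 'rV[R]_n) :
  (forall lam : nat -> R, \sum_(i < k.+1) lam i = 0 ->
     \sum_(i < k.+1) lam i *: p i = 0 -> forall i, (i < k.+1)%N -> lam i = 0) ->
  (k <= n)%N.
Proof.
move=> HL.
have Hfree : row_free (dmx k p).
  apply: inj_row_free => v Hv.
  pose lam := fun j : nat => if j is j'.+1 then oapp (v 0) 0 (insub j')
     else - \sum_(i < k) v 0 i.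
  have Hlam : forall i : 'I_k, lam (bump 0 i) = v 0 i.
    by move=> i; rewrite /bump /= valK.
  have Hsum : \sum_(i < k.+1) lam i = 0.
    rewrite big_ord_recl.
    under eq_bigr => i _ do rewrite Hlam.
    by rewrite /= addrC addrN.
  have Hvec : \sum_(i < k.+1) lam i *: p i = 0.
    apply: etrans Hv; rewrite dmx_mul big_ord_recl.
    under eq_bigr => i _ do rewrite Hlam.
    under [RHS]eq_bigr => i _ do rewrite scalerBr.
    by rewrite sumrB /= scaleNr -scaler_suml addrC.
  apply/rowP => i; rewrite mxE -Hlam; apply: HL => //.
  by rewrite /bump /= ltnS ltn_ord.
by move: (rank_leq_col (dmx k p)); rewrite (eqP Hfree).
Qed.

Lemma span_core k (p : nat -> 'rV[R]_n) :
  (forall z, exists lam : nat -> R,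
     \sum_(i < k.+1) lam i = 1 /\ z = \sum_(i < k.+1) lam i *: p i) ->
  (n <= k)%N.
Proof.
move=> HL.
have Hfull : row_full (dmx k p).
  rewrite -sub1mx; apply/row_subP => j; apply/submxP.
  have [lam [Hs Hz]] := HL (p 0%N + row j 1%:M).
  exists (\row_(i < k) lam i.+1).
  rewrite dmx_mul.
  have -> : row j (1%:M : 'M[R]_n) = p 0%N + row j 1%:M - p 0%N by rewrite addrC addKr.
  rewrite Hz big_ord_recl.
  under [RHS]eq_bigr => i _ do rewrite mxE scalerBr.
  rewrite sumrB -scaler_suml.
  have Hs' : \sum_(i < k) lam i.+1 = 1 - lam 0%N.
    by rewrite -Hs big_ord_recl addrC addKr.
  rewrite Hs' scalerBl scale1r /=.
  have -> : \sum_(i < k) lam (bump 0 i) *: p (bump 0 i) =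
            \sum_(i < k) lam i.+1 *: p i.+1 by [].
  by rewrite opprB addrA (addrC (lam 0%N *: _)).
by move: (rank_leq_row (dmx k p)); rewrite (eqP Hfull).
Qed.

Lemma affindep_size (L : seq 'rV[R]_n) : aff_indep L -> (size L <= n.+1)%N.
Proof.
move=> HL; case Hk: (size L) => [//|k]; rewrite ltnS.
apply: (@indep_core k (fun i => L`_i)) => lam Hs Hv i Hi.
by apply: HL; rewrite ?Hk.
Qed.

Lemma span_size (L : seq 'rV[R]_n) :
  (forall z, exists lam : nat -> R,
     \sum_(i < size L) lam i = 1 /\ z = \sum_(i < size L) lam i *: L`_i) ->
  (n.+1 <= size L)%N.
Proof.
move=> HL; case Hk: (size L) => [|k].
  have [lam [Hs _]] := HL 0; move: Hs; rewrite Hk big_ord0 => /eqP.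
  by rewrite eq_sym oner_eq0.
rewrite ltnS; apply: (@span_core k (fun i => L`_i)) => z.
by have := HL z; rewrite Hk.
Qed.
End Dim.

Section Arr2.
Variables (R : realType) (n : nat) (H : set ('rV[R]_n * R)).
Hypothesis HA : affine_reflection_arrangement H.
Hypothesis HS : simplicial_arrangement H.
Implicit Types (x y z u v w p q : 'rV[R]_n) (h : 'rV[R]_n * R).

Definition cellL y : seq 'rV[R]_n := projT1 (cid (HS y)).

Lemma cellLP y : [/\ uniq (cellL y), aff_indep (cellL y),
     closedcell H y = convex_hull (cellL y) &
     forall z, (closedcell H y z /\ cox_vertex H z) <-> z \in cellL y].
Proof. exact: (projT2 (cid (HS y))). Qed.

Lemma cellL_uniq y : uniq (cellL y). Proof. by case: (cellLP y). Qed.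
Lemma cellL_indep y : aff_indep (cellL y). Proof. by case: (cellLP y). Qed.
Lemma cellL_hull y : closedcell H y = convex_hull (cellL y). Proof. by case: (cellLP y). Qed.
Lemma cellL_vert y z : (closedcell H y z /\ cox_vertex H z) <-> z \in cellL y.
Proof. by case: (cellLP y). Qed.

Lemma cellL_in y z : z \in cellL y -> closedcell H y z.
Proof. by move/cellL_vert => []. Qed.

Lemma cell_refl x : closedcell H x x.
Proof. by move=> h Hh; split => // /ltW. Qed.

Lemma cell_conv x k (lam : nat -> R) (pt : nat -> 'rV[R]_n) :
  (forall i, (i < k)%N -> 0 <= lam i) -> \sum_(i < k) lam i = 1 ->
  (forall i, (i < k)%N -> closedcell H x (pt i)) ->
  closedcell H x (\sum_(i < k) lam i *: pt i).
Proof.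
move=> Hl Hs Hp h Hh; rewrite side_comb //; split => Hx.
- by apply: big1 => i _; have [Hz _ _] := Hp i (ltn_ord i) h Hh; rewrite Hz // mulr0.
- apply: sumr_ge0 => i _; have [_ Hz _] := Hp i (ltn_ord i) h Hh.
  by apply: mulr_ge0; [apply: Hl|apply: Hz].
- rewrite -oppr_ge0 -sumrN; apply: sumr_ge0 => i _; have [_ _ Hz] := Hp i (ltn_ord i) h Hh.
  by rewrite -mulrN; apply: mulr_ge0; [apply: Hl|rewrite oppr_ge0; apply: Hz].
Qed.

Lemma cell_conv2 x p q (t : R) : 0 <= t <= 1 ->
  closedcell H x p -> closedcell H x q -> closedcell H x (p + t *: (q - p)).
Proof.
move=> /andP [Ht0 Ht1] Hp Hq h Hh.
have [Hp1 Hp2 Hp3] := Hp h Hh; have [Hq1 Hq2 Hq3] := Hq h Hh.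
rewrite side_line dotvBr.
have -> : dotv h.1 q - dotv h.1 p = side h q - side h p by rewrite /side; ring.
split => Hx.
- by rewrite Hp1 // Hq1 // subrr mulr0 addr0.
- have := Hp2 Hx; have := Hq2 Hx; nra.
- have := Hp3 Hx; have := Hq3 Hx; nra.
Qed.

Lemma cell_weak x z h : H h -> closedcell H x z -> 0 <= side h x * side h z.
Proof.
move=> Hh Hz; have [Z1 Z2 Z3] := Hz h Hh.
have [Hx|Hx|Hx] := ltgtP (side h x) 0.
- by have := Z3 Hx; nra.
- by have := Z2 Hx; nra.
- by rewrite Hx mul0r.
Qed.

Lemma cell_strict x z h : H h -> closedcell H x z -> side h x != 0 ->
  side h z != 0 -> 0 < side h x * side h z.
Proof.
move=> Hh Hz Hx Hz0; rewrite lt_def mulf_neq0 //=; exact: cell_weak.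
Qed.

Lemma cell_eq_sign x z : generic H x ->
  (forall h, H h -> 0 < side h x * side h z) -> closedcell H z = closedcell H x.
Proof.
move=> Gx Hs; apply/funext => w; apply/propext; split => Hw h Hh;
  have := Hs h Hh; have [W1 W2 W3] := Hw h Hh; move=> Hp.
- split => Hxh.
  + by move: Hp; rewrite Hxh mul0r ltxx.
  + by apply: W2; nra.
  + by apply: W3; nra.
- split => Hzh.
  + by move: Hp; rewrite Hzh mulr0 ltxx.
  + by apply: W2; nra.
  + by apply: W3; nra.
Qed.

Lemma generic_in y z : generic H y -> generic H z -> closedcell H y z ->
  forall h, H h -> 0 < side h y * side h z.
Proof. by move=> Gy Gz Hz h Hh; apply: cell_strict => //; [apply: Gy|apply: Gz]. Qed.

Lemma seg_cell y z : generic H y ->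
  exists t : R, 0 < t /\ closedcell H y (y + t *: (z - y)).
Proof.
move=> Gy; have [t [Ht0 Ht1 _ Hseg]] := seg HA y (z - y).
exists t; split => // h Hh.
have Hp := Hseg h Hh (Gy h Hh) t (ltac:(by rewrite lexx ltW)).
split => Hyh.
- by move: Hp; rewrite Hyh mul0r ltxx.
- by nra.
- by nra.
Qed.

Lemma span_cell y : generic H y -> forall z, exists lam : nat -> R,
  \sum_(i < size (cellL y)) lam i = 1 /\ z = \sum_(i < size (cellL y)) lam i *: (cellL y)`_i.
Proof.
move=> Gy z; have [t [Ht Hc]] := seg_cell z Gy.
move: Hc (cell_refl y); rewrite cellL_hull => -[l1 [_ [Hs1 Hz1]]] [l0 [_ [Hs0 Hz0]]].
set L := cellL y in Hs1 Hz1 Hs0 Hz0 *.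
exists (fun i => (1 - t^-1) * l0 i + t^-1 * l1 i); split.
  by rewrite big_split /= -!mulr_sumr Hs1 Hs0; ring.
under eq_bigr => i _ do rewrite scalerDl -!scalerA.
rewrite big_split /= -!scaler_sumr -Hz1 -Hz0.
rewrite scalerDr scalerA mulVf ?gt_eqF // scale1r scalerBl scale1r.
by rewrite addrA subrK addrC subrK.
Qed.

Lemma size_cellL y : generic H y -> size (cellL y) = n.+1.
Proof.
move=> Gy; apply/eqP; rewrite eqn_leq affindep_size ?cellL_indep //=.
  exact: span_size (span_cell Gy).
exact: cellL_indep.
Qed.

Lemma aff_vanish y (b : 'rV[R]_n) (d : R) : generic H y ->
  (forall p, p \in cellL y -> dotv b p - d = 0) -> forall z, dotv b z - d = 0.
Proof.
move=> Gy Hv z; have [lam [Hs ->]] := span_cell Gy z.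
have := side_comb (b, d) (fun i => (cellL y)`_i) Hs; rewrite /side /= => ->.
by apply: big1 => i _; rewrite Hv ?mulr0 // mem_nth.
Qed.

Lemma refl_H h h' : H h -> H h' -> exists h'' (mu : R),
  [/\ H h'', mu != 0 & forall x, side h' (refl h x) = mu * side h'' x].
Proof.
move=> Hh Hh'; have Hnz := HA_nz HA Hh.
case: HA => A B _; have [h'' [Hh'' E]] := B h h' Hh Hh'.
pose k := 2 * dotv h'.1 h.1 / dotv h.1 h.1.
have Hsr : forall x, side h' (refl h x) = dotv (h'.1 - k *: h.1) x - (h'.2 - k * h.2).
  by move=> x; rewrite side_refl_other.
have Hz : forall x, dotv h''.1 x = h''.2 <-> dotv (h'.1 - k *: h.1) x = (h'.2 - k * h.2).
  move=> x.
  have Hiff : hplane h'' x <-> side h' (refl h x) = 0.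
    rewrite E; split.
      by move=> [w Hw <-]; rewrite reflE refl_invol.
    by move=> Hw; exists (refl h x) => //; rewrite reflE refl_invol.
  rewrite Hsr in Hiff; split.
    move=> Hx; apply/eqP; rewrite -subr_eq0; apply/eqP/Hiff.
    by rewrite /hplane /= /side Hx subrr.
  move=> Hx; have : hplane h'' x by apply/Hiff; rewrite Hx subrr.
  by rewrite /hplane /= /side => /eqP; rewrite subr_eq0 => /eqP.
have [mu [Hmu Hm]] := same_zero_prop (A _ Hh'') Hz.
by exists h'', mu; split => // x; rewrite Hsr Hm.
Qed.

Lemma refl_cell h x z : H h -> closedcell H x z -> closedcell H (refl h x) (refl h z).
Proof.
move=> Hh Hz h' Hh'; have [h'' [mu [Hh'' Hmu Hs]]] := refl_H Hh Hh'.
rewrite !Hs; have [Z1 Z2 Z3] := Hz h'' Hh''.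
have [Hm|Hm|Hm] := ltgtP mu 0; last by move: Hmu; rewrite Hm eqxx.
- split => Hx.
  + by move: Hx => /eqP; rewrite mulf_eq0 (negbTE Hmu) /= => /eqP /Z1 ->; rewrite mulr0.
  + have Hl : side h'' x < 0 by nra.
    by have := Z3 Hl; nra.
  + have Hl : 0 < side h'' x by nra.
    by have := Z2 Hl; nra.
- split => Hx.
  + by move: Hx => /eqP; rewrite mulf_eq0 (negbTE Hmu) /= => /eqP /Z1 ->; rewrite mulr0.
  + have Hl : 0 < side h'' x by nra.
    by have := Z2 Hl; nra.
  + have Hl : side h'' x < 0 by nra.
    by have := Z3 Hl; nra.
Qed.

Lemma refl_cell_iff h x z : H h -> closedcell H (refl h x) z <-> closedcell H x (refl h z).
Proof.
move=> Hh; have Hnz := HA_nz HA Hh; split => Hz.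
  by have := refl_cell Hh Hz; rewrite refl_invol.
by have := refl_cell Hh Hz; rewrite refl_invol.
Qed.

Lemma refl_vertex h z : H h -> cox_vertex H z -> cox_vertex H (refl h z).
Proof.
move=> Hh Hz; have Hnz := HA_nz HA Hh.
apply/funext => w; apply/propext; rewrite refl_cell_iff // Hz /=; split.
  by move=> <-; rewrite refl_invol.
by move=> ->; rewrite refl_invol.
Qed.

Lemma refl_generic h y : H h -> generic H y -> generic H (refl h y).
Proof.
move=> Hh Gy h' Hh'; have [h'' [mu [Hh'' Hmu Hs]]] := refl_H Hh Hh'.
by rewrite Hs mulf_neq0 // Gy.
Qed.

Lemma refl_cellL h y z : H h -> (z \in cellL (refl h y)) = (refl h z \in cellL y).
Proof.
move=> Hh; have Hnz := HA_nz HA Hh.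
apply/idP/idP => /cellL_vert [Hc Hv]; apply/cellL_vert; split.
- by rewrite -refl_cell_iff.
- exact: refl_vertex.
- by rewrite refl_cell_iff.
- by have := refl_vertex Hh Hv; rewrite refl_invol.
Qed.

Section Bary.
Variable (k i0 : nat).
Hypothesis Hk : k = n.+1.
Hypothesis Hn : (0 < n)%N.
Hypothesis Hi0 : (i0 < k)%N.

Definition beta (j : nat) : R := if j == i0 then 0 else n%:R^-1.

Lemma beta_ge0 j : 0 <= beta j.
Proof. by rewrite /beta; case: eqP => // _; rewrite invr_ge0 ler0n. Qed.

Lemma beta_gt0 j : j != i0 -> 0 < beta j.
Proof. by rewrite /beta => /negbTE ->; rewrite invr_gt0 ltr0n. Qed.

Lemma beta_sum : \sum_(j < k) beta j = 1.
Proof.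
rewrite (bigD1 (Ordinal Hi0)) //= /beta eqxx add0r.
rewrite (eq_bigr (fun _ => n%:R^-1)); last by move=> j /negbTE; rewrite -val_eqE /= => ->.
rewrite sumr_const.
have -> : #|[pred i : 'I_k | i != Ordinal Hi0]| = n.
  by rewrite cardC1 card_ord Hk.
by rewrite -[n%:R^-1 *+ n]mulr_natl mulfV // pnatr_eq0 -lt0n.
Qed.

Lemma beta_zero (c : nat -> R) : (forall j, (j < k)%N -> 0 <= c j) ->
  \sum_(j < k) beta j * c j = 0 -> forall j, (j < k)%N -> j != i0 -> c j = 0.
Proof.
move=> Hc Hs j Hj Hji.
have /psumr_eq0P H0 : \sum_(j < k) beta j * c j = 0 by [].
have := H0 (fun j _ => mulr_ge0 (beta_ge0 j) (Hc j (ltn_ord j))) (Ordinal Hj) isT.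
by move=> /eqP; rewrite mulf_eq0 /= gt_eqF ?beta_gt0 //= => /eqP.
Qed.
End Bary.

Lemma cellL_nth y j : (j < size (cellL y))%N -> closedcell H y (cellL y)`_j.
Proof. by move=> Hj; apply: cellL_in; rewrite mem_nth. Qed.

Lemma vanish_all y h : generic H y -> H h ->
  (forall j, (j < size (cellL y))%N -> side h (cellL y)`_j = 0) -> False.
Proof.
move=> Gy Hh Hall.
have Hv : forall p, p \in cellL y -> dotv h.1 p - h.2 = 0.
  by move=> p Hp; rewrite -(nth_index 0 Hp); apply: Hall; rewrite index_mem.
have := aff_vanish Gy Hv y; move: (Gy h Hh); rewrite /side => /eqP.
by [].
Qed.

Lemma bary_cell y i0 : (0 < n)%N -> generic H y -> (i0 < size (cellL y))%N ->
  closedcell H y (\sum_(j < size (cellL y)) beta i0 j *: (cellL y)`_j).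
Proof.
move=> Hn Gy Hi0; apply: cell_conv.
- by move=> j _; apply: beta_ge0.
- exact: (beta_sum (size_cellL Gy) Hn Hi0).
- by move=> j Hj; apply: cellL_nth.
Qed.

Lemma bary_side y i0 h : (0 < n)%N -> generic H y -> (i0 < size (cellL y))%N ->
  H h -> side h (\sum_(j < size (cellL y)) beta i0 j *: (cellL y)`_j) = 0 ->
  forall j, (j < size (cellL y))%N -> j != i0 -> side h (cellL y)`_j = 0.
Proof.
move=> Hn Gy Hi0 Hh.
rewrite side_comb ?(beta_sum (size_cellL Gy) Hn Hi0) // => Hs.
have Hs' : \sum_(j < size (cellL y)) beta i0 j * (side h y * side h (cellL y)`_j) = 0.
  under eq_bigr => j _ do rewrite mulrCA.
  by rewrite -mulr_sumr Hs mulr0.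
move=> j Hj Hji.
have := @beta_zero (size (cellL y)) i0 Hn _ (fun j Hj => cell_weak Hh (cellL_nth Hj)) Hs' j Hj Hji.
by move/eqP; rewrite mulf_eq0 (negbTE (Gy h Hh)) => /eqP.
Qed.

Lemma facet_wall y i0 : (0 < n)%N -> generic H y -> (i0 < size (cellL y))%N ->
  exists h, [/\ H h, side h (cellL y)`_i0 != 0 &
     forall j, (j < size (cellL y))%N -> j != i0 -> side h (cellL y)`_j = 0].
Proof.
move=> Hn Gy Hi0.
set L := cellL y.
set b := \sum_(j < size L) beta i0 j *: L`_j.
have Hbc : closedcell H y b by apply: bary_cell.
have [[h [Hh Hb]]|Hno] := pselect (exists h, H h /\ side h b = 0).
  have Hz := bary_side Hn Gy Hi0 Hh Hb.
  exists h; split => //; apply/negP => /eqP H0.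
  apply: (vanish_all Gy Hh) => j Hj.
  by have [->|Hji] := eqVneq j i0; [|apply: Hz].
have Gb : generic H b.
  by move=> h Hh; apply/negP => /eqP Hb; apply: Hno; exists h.
exfalso.
have [t [Ht0 Ht1 _ Hseg]] := seg HA b (b - L`_i0).
set z := b + t *: (b - L`_i0).
have Hz : closedcell H y z.
  move=> h Hh.
  have H1 := generic_in Gy Gb Hbc Hh.
  have H2 := Hseg h Hh (Gb h Hh) t (ltac:(by rewrite lexx ltW)).
  have H3 : 0 < side h y * side h z by rewrite /z; nra.
  split => Hyh.
  + by move: H3; rewrite Hyh mul0r ltxx.
  + by nra.
  + by nra.
move: Hz; rewrite cellL_hull -/L => -[lam [Hl0 [Hls Hzl]]].
pose gam := fun j => (1 + t) * beta i0 j - t * (j == i0)%:R.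
have Hgs : \sum_(j < size L) gam j = 1.
  rewrite /gam sumrB -mulr_sumr (beta_sum (size_cellL Gy) Hn Hi0) mulr1 -mulr_sumr.
  rewrite (bigD1 (Ordinal Hi0)) //= eqxx big1 ?addr0 ?mulr1; first by ring.
  by move=> j /negbTE; rewrite -val_eqE /= => ->.
have Hgz : \sum_(j < size L) gam j *: L`_j = z.
  under eq_bigr => j _ do rewrite /gam scalerBl -scalerA -scalerA.
  rewrite sumrB -!scaler_sumr -/b.
  rewrite (bigD1 (Ordinal Hi0)) //= eqxx scale1r big1 ?addr0; last first.
    by move=> j /negbTE; rewrite -val_eqE /= => ->; rewrite scale0r.
  by rewrite /z scalerDl scale1r scalerBr addrA.
have Hlt : lam i0 - gam i0 = 0.
  apply: (@cellL_indep y (fun j => lam j - gam j)) => //.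
    by rewrite sumrB Hls Hgs subrr.
  under eq_bigr => j _ do rewrite scalerBl.
  by rewrite sumrB -Hzl Hgz subrr.
move: Hlt; rewrite /gam /beta eqxx mulr0 sub0r mulr1 opprK => Hlt.
have := Hl0 i0; have -> : lam i0 = - t by lra.
by rewrite oppr_ge0 leNgt Ht0.
Qed.

Lemma bary_side_h y i0 h : (0 < n)%N -> generic H y -> (i0 < size (cellL y))%N ->
  (forall j, (j < size (cellL y))%N -> j != i0 -> side h (cellL y)`_j = 0) ->
  side h (\sum_(j < size (cellL y)) beta i0 j *: (cellL y)`_j) = 0.
Proof.
move=> Hn Gy Hi0 Hz; rewrite side_comb ?(beta_sum (size_cellL Gy) Hn Hi0) //.
apply: big1 => j _; have [Hj|Hj] := eqVneq (nat_of_ord j) i0.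
  by rewrite /beta Hj eqxx mul0r.
by rewrite Hz // mulr0.
Qed.

Lemma at2_core y i0 h y' q : (0 < n)%N -> generic H y -> (i0 < size (cellL y))%N ->
  H h -> side h (cellL y)`_i0 != 0 ->
  (forall j, (j < size (cellL y))%N -> j != i0 -> side h (cellL y)`_j = 0) ->
  generic H y' ->
  (forall j, (j < size (cellL y))%N -> j != i0 -> closedcell H y' (cellL y)`_j) ->
  closedcell H y' q -> 0 < side h q * side h (cellL y)`_i0 ->
  closedcell H y' = closedcell H y.
Proof.
move=> Hn Gy Hi0 Hh Hs Hf Gy' Hc Hq Hqs.
set L := cellL y in Hs Hf Hc Hqs *.
set b := \sum_(j < size L) beta i0 j *: L`_j.
have Hby : closedcell H y b by apply: bary_cell.
have Hby' : closedcell H y' b.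
  have -> : b = \sum_(j < size L) beta i0 j *: (if (j : nat) == i0 then q else L`_j).
    apply: eq_bigr => j _; case: eqP => // ->.
    by rewrite /beta eqxx !scale0r.
  apply: (cell_conv (lam := beta i0) (pt := fun j => if j == i0 then q else L`_j)).
  - by move=> j _; apply: beta_ge0.
  - exact: (beta_sum (size_cellL Gy) Hn Hi0).
  - by move=> j Hj; case: eqP => // /eqP; apply: Hc.
have [t [Ht0 Ht1 _ Hseg]] := seg HA b (q - b).
set z := b + t *: (q - b).
have Hzy' : closedcell H y' z by apply: cell_conv2 => //; rewrite ltW.
have Hbh : side h b = 0 by apply: bary_side_h.
have Hzh : side h z = t * side h q.
  by rewrite /z side_line dotvBr -/(side h q) (_ : dotv h.1 b = h.2) ?Hbh;
     rewrite /side in Hbh *; [ring|lra].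
have Hyz : forall h', H h' -> 0 < side h' y * side h' z.
  move=> h' Hh'; have [Hb0|Hb0] := eqVneq (side h' b) 0; last first.
    have H1 := cell_strict Hh' Hby (Gy h' Hh') Hb0.
    have H2 := Hseg h' Hh' Hb0 t (ltac:(by rewrite lexx ltW)).
    by rewrite /z; nra.
  have Hz0 := bary_side Hn Gy Hi0 Hh' Hb0.
  have Hs0 : side h' L`_i0 != 0.
    apply/negP => /eqP H0; apply: (vanish_all Gy Hh') => j Hj.
    by have [->|Hji] := eqVneq j i0; [|apply: Hz0].
  pose mu := side h' L`_i0 / side h L`_i0.
  have Hmu : mu * side h L`_i0 = side h' L`_i0 by rewrite /mu divfK.
  have Hv : forall p, p \in L -> dotv (h'.1 - mu *: h.1) p - (h'.2 - mu * h.2) = 0.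
    move=> p Hp; rewrite -(nth_index 0 Hp).
    have Hj : (index p L < size L)%N by rewrite index_mem.
    have -> : dotv (h'.1 - mu *: h.1) L`_(index p L) - (h'.2 - mu * h.2) =
      side h' L`_(index p L) - mu * side h L`_(index p L).
      by rewrite /side dotvBl dotvZl; ring.
    have [Hji|Hji] := eqVneq (index p L) i0.
      by rewrite Hji Hmu subrr.
    by rewrite Hz0 // Hf // mulr0 subrr.
  have Hall := aff_vanish Gy Hv.
  have Hzz : side h' z = mu * side h z.
    by have := Hall z; rewrite /side dotvBl dotvZl => H0; lra.
  have Hyy := cell_strict Hh' (cellL_nth Hi0) (Gy h' Hh') Hs0.
  rewrite Hzz Hzh.
  have HC : 0 < side h L`_i0 * side h L`_i0.
    by rewrite lt_def mulf_neq0 // -expr2 sqr_ge0.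
  have : 0 < (side h' y * (mu * (t * side h q))) * (side h L`_i0 * side h L`_i0).
    have -> : (side h' y * (mu * (t * side h q))) * (side h L`_i0 * side h L`_i0)
      = t * ((side h' y * (mu * side h L`_i0)) * (side h q * side h L`_i0)) by ring.
    rewrite Hmu; apply: mulr_gt0 => //; exact: mulr_gt0.
  by rewrite (@pmulr_lgt0 _ (side h L`_i0 * side h L`_i0) _ HC).
have Gz : generic H z.
  by move=> h' Hh'; have := Hyz h' Hh'; apply: contraTneq => ->; rewrite mulr0 ltxx.
rewrite -(cell_eq_sign Gy Hyz).
apply: cell_eq_sign => // h' Hh'.
by rewrite mulrC; apply: generic_in.
Qed.

Lemma at2 y i0 h y' : (0 < n)%N -> generic H y -> (i0 < size (cellL y))%N ->
  H h -> side h (cellL y)`_i0 != 0 ->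
  (forall j, (j < size (cellL y))%N -> j != i0 -> side h (cellL y)`_j = 0) ->
  generic H y' ->
  (forall j, (j < size (cellL y))%N -> j != i0 -> closedcell H y' (cellL y)`_j) ->
  closedcell H y' = closedcell H y \/ closedcell H y' = closedcell H (refl h y).
Proof.
move=> Hn Gy Hi0 Hh Hs Hf Gy' Hc.
have Hnz := HA_nz HA Hh.
have [q [Hq Hqh]] : exists q, closedcell H y' q /\ side h q != 0.
  have [//|Hno] := pselect (exists q, closedcell H y' q /\ side h q != 0).
  exfalso; apply: (vanish_all Gy' Hh) => j Hj.
  apply/eqP; apply/negP => Hne; apply: Hno; exists (cellL y')`_j; split.
    exact: cellL_nth.
  by apply/negP.
have [Hp|Hp] : 0 < side h q * side h (cellL y)`_i0 \/
               0 < side h q * side h (refl h (cellL y)`_i0).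
  rewrite side_refl // mulrN oppr_gt0.
  have : side h q * side h (cellL y)`_i0 != 0 by rewrite mulf_neq0.
  by rewrite neq_lt => /orP [->|->]; [right|left].
  by left; apply: at2_core Hp.
right.
set L := cellL y; set L' := cellL (refl h y).
have Gry := refl_generic Hh Gy.
have HiL : refl h L`_i0 \in L'.
  by rewrite /L' refl_cellL // refl_invol // mem_nth.
set i1 := index (refl h L`_i0) L'.
have Hi1 : (i1 < size L')%N by rewrite index_mem.
have HL'i1 : L'`_i1 = refl h L`_i0 by rewrite nth_index.
have Hf' : forall j, (j < size L')%N -> j != i1 -> side h L'`_j = 0 /\ L'`_j = refl h L'`_j
   /\ exists m, [/\ (m < size L)%N, m != i0 & L`_m = L'`_j].
  move=> j Hj Hji.
  have Hm : refl h L'`_j \in L by rewrite -refl_cellL // mem_nth.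
  set m := index (refl h L'`_j) L.
  have Hmi : (m < size L)%N by rewrite index_mem.
  have HLm : L`_m = refl h L'`_j by rewrite nth_index.
  have Hm0 : m != i0.
    apply/negP => /eqP Hmi0.
    have : L'`_j = L'`_i1.
      by rewrite HL'i1 -Hmi0 HLm refl_invol.
    by move/eqP; rewrite nth_uniq ?cellL_uniq // (negbTE Hji).
  have Hs0 : side h (refl h L'`_j) = 0 by rewrite -HLm Hf.
  have Hs1 : side h L'`_j = 0 by move: Hs0; rewrite side_refl // => /eqP; rewrite oppr_eq0 => /eqP.
  split => //; split; first by rewrite refl_fix.
  by exists m; split => //; rewrite HLm refl_fix.
apply: (@at2_core (refl h y) i1 h y' q) => //.
- by rewrite HL'i1 side_refl // oppr_eq0.
- by move=> j Hj Hji; have [] := Hf' j Hj Hji.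
- move=> j Hj Hji; have [_ [_ [m [Hm Hm0 <-]]]] := Hf' j Hj Hji.
  exact: Hc.
- by rewrite HL'i1.
Qed.
End Arr2.

Section ConvAff.
Variables (R : realType) (n : nat).

Lemma conv_affine (F : 'rV[R]_n -> R) :
  (forall (t : R) z1 z2, 0 <= t <= 1 -> F (t *: z1 + (1 - t) *: z2) = t * F z1 + (1 - t) * F z2) ->
  exists (c : R) (g : 'rV[R]_n), forall z, F z = c + dotv g z.
Proof.
move=> Hc.
have Hgt1 : forall (t : R) z1 z2, 1 < t -> F (t *: z1 + (1 - t) *: z2) = t * F z1 + (1 - t) * F z2.
  move=> t z1 z2 Ht.
  have Ht0 : t != 0 by rewrite gt_eqF // (lt_trans ltr01).
  set p := t *: z1 + (1 - t) *: z2.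
  have Hz1 : z1 = t^-1 *: p + (1 - t^-1) *: z2.
    rewrite /p scalerDr !scalerA mulVf // scale1r -addrA -scalerDl.
    have -> : t^-1 * (1 - t) + (1 - t^-1) = 0 by field.
    by rewrite scale0r addr0.
  have Htp : 0 < t by apply: lt_trans Ht.
  have Hti : 0 <= t^-1 <= 1.
    by rewrite invr_ge0 (ltW Htp) /= invf_le1 // ltW.
  have := Hc _ p z2 Hti; rewrite -Hz1 => HF.
  have -> : F p = t * (F z1 - (1 - t^-1) * F z2) by rewrite HF; field.
  by field.
have Hline : forall (t : R) z1 z2, F (t *: z1 + (1 - t) *: z2) = t * F z1 + (1 - t) * F z2.
  move=> t z1 z2; have [Ht|Ht] := leP t 1; last exact: Hgt1.
  have [Ht0|Ht0] := leP 0 t; first by apply: Hc; rewrite Ht0 Ht.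
  have := Hgt1 (1 - t) z2 z1 (ltac:(lra)).
  have E : 1 - (1 - t) = t :> R by ring.
  rewrite E => HH; rewrite addrC HH; ring.
pose L := fun v => F v - F 0.
have LZ : forall (t : R) v, L (t *: v) = t * L v.
  move=> t v; rewrite /L.
  have := Hline t v 0; rewrite scaler0 addr0 => ->; ring.
have LD : forall v w, L (v + w) = L v + L w.
  move=> v w.
  have H1 := Hline (1 / 2) v w.
  have -> : v + w = 2 *: ((1 / 2) *: v + (1 - 1 / 2) *: w).
    rewrite scalerDr !scalerA.
    have -> : 2 * (1 / 2) = 1 :> R by field.
    have -> : 2 * (1 - 1 / 2) = 1 :> R by field.
    by rewrite !scale1r.
  by rewrite LZ /L H1; field.
have L0 : L 0 = 0 by rewrite /L subrr.
have Lsum : forall (I : Type) (r : seq I) (P : pred I) (f : I -> 'rV[R]_n),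
    L (\sum_(i <- r | P i) f i) = \sum_(i <- r | P i) L (f i).
  move=> I r P f; elim/big_rec2: _ => [|i x y _ <-]; first exact: L0.
  by rewrite LD.
exists (F 0), (\row_k L 'e_k) => z.
have -> : F z = F 0 + L z by rewrite /L addrC subrK.
congr (_ + _).
rewrite {1}(row_sum_delta z) Lsum /dotv; apply: eq_bigr => k _.
by rewrite LZ mxE mulrC.
Qed.
End ConvAff.

Local Open Scope fset_scope.
Local Open Scope ring_scope.

Section Ind.
Variables (R : realType) (V : choiceType).

Lemma sum_ind (T : lmodType R) (s : {fset V}) (a : V) (F : V -> T) :
  a \in s -> \sum_(w <- s) ((w == a)%:R : R) *: F w = F a.
Proof.
move=> Ha; rewrite (bigD1_seq a) ?fset_uniq //= eqxx scale1r big1 ?addr0 //.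
by move=> w /negbTE ->; rewrite scale0r.
Qed.

Lemma sum_indR (s : {fset V}) (a : V) (F : V -> R) :
  a \in s -> \sum_(w <- s) (w == a)%:R * F w = F a.
Proof.
move=> Ha; rewrite (bigD1_seq a) ?fset_uniq //= eqxx mul1r big1 ?addr0 //.
by move=> w /negbTE ->; rewrite mul0r.
Qed.
End Ind.

Section Apt.
Variables (R : realType) (n : nat) (V : choiceType).
Variables (H : set ('rV[R]_n * R)) (D : set {fset V}) (A : set (set {fset V})).
Hypothesis HB : euclidean_building H D A.
Variable a : realisation R D -> R.
Hypothesis Haff : affine_functional H A a.
Variable v0 : V.

Lemma HB_arr : affine_reflection_arrangement H. Proof. by case: HB => -[]. Qed.
Lemma HB_simp : simplicial_arrangement H. Proof. by case: HB => -[]. Qed.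
Lemma HB_cx : complex D. Proof. by case: HB. Qed.
Lemma HB_app S : A S -> [/\ complex S, (forall s, S s -> D s) & exists psi, cox_iso H S psi].
Proof. by case: HB => _ _ Ha _ _; apply: Ha. Qed.
Lemma HB_two s t : D s -> D t -> exists S, [/\ A S, S s & S t].
Proof. by case: HB => _ _ _ Ht _; apply: Ht. Qed.
Lemma HB_iso S S' C : A S -> A S' -> chamber D C -> S C -> S' C ->
  exists f, cx_iso S S' f /\ forall v, cvertex S v -> cvertex S' v -> f v = v.
Proof. by case: HB => _ _ _ _ Hi; apply: Hi. Qed.

Section OneApt.
Variables (S : set {fset V}) (psi : V -> 'rV[R]_n).
Hypothesis HAS : A S.
Hypothesis Hpsi : cox_iso H S psi.

Lemma S_cx : complex S. Proof. by case: (HB_app HAS). Qed.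
Lemma S_D s : S s -> D s. Proof. by case: (HB_app HAS) => _ H1 _; apply: H1. Qed.

Lemma S_vert s v : S s -> v \in s -> cvertex S v.
Proof. by move=> Hs Hv; apply: S_cx Hs _; rewrite fsub1set. Qed.

Lemma psi_inj v w : cvertex S v -> cvertex S w -> psi v = psi w -> v = w.
Proof. by case: Hpsi => Hi _ _; apply: Hi. Qed.

Lemma psi_surj z : cox_vertex H z -> exists v, cvertex S v /\ psi v = z.
Proof. by case: Hpsi => _ Hs _; apply: Hs. Qed.

Lemma psi_simplex s : (forall v, v \in s -> cvertex S v) ->
  (S s <-> cox_simplex H (psi @` [set v | v \in s])%classic).
Proof. by case: Hpsi => _ _ Hs; apply: Hs. Qed.

Lemma S_cox s : S s -> exists x, forall v, v \in s ->
  closedcell H x (psi v) /\ cox_vertex H (psi v).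
Proof.
move=> Hs; have := (psi_simplex (fun v Hv => S_vert Hs Hv)).1 Hs.
by move=> [x Hx]; exists x => v Hv; apply: Hx; exists v.
Qed.

Lemma psi_vertex v : cvertex S v -> cox_vertex H (psi v).
Proof.
move=> Hv; have [x Hx] := S_cox Hv.
by have [] := Hx v (fset11 v).
Qed.

Lemma S_gen s : S s -> exists y, generic H y /\
  forall v, v \in s -> psi v \in cellL HB_simp y.
Proof.
move=> Hs; have [x Hx] := S_cox Hs.
have [y [Gy Hxy]] := gen HB_arr x.
exists y; split => // v Hv; have [H1 H2] := Hx v Hv.
by apply/cellL_vert; split => //; apply: Hxy.
Qed.

Definition preS (p : 'rV[R]_n) : V :=
  match pselect (exists v, cvertex S v /\ psi v = p) with
  | left e => projT1 (cid e)
  | right _ => v0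
  end.

Lemma preSP p : cox_vertex H p -> cvertex S (preS p) /\ psi (preS p) = p.
Proof.
move=> Hp; rewrite /preS; case: pselect => [e|Hn].
  exact: (projT2 (cid e)).
by exfalso; apply: Hn; apply: psi_surj.
Qed.

Lemma preS_psi v : cvertex S v -> preS (psi v) = v.
Proof.
move=> Hv; have [H1 H2] := preSP (psi_vertex Hv).
exact: psi_inj.
Qed.

Lemma S_of_cell x (l : seq 'rV[R]_n) :
  (forall p, p \in l -> closedcell H x p /\ cox_vertex H p) ->
  S (preS @` [fset p in l]).
Proof.
move=> Hl.
have Hv : forall v, v \in preS @` [fset p in l] -> cvertex S v.
  move=> v /imfsetP [p /= Hp ->]; rewrite inE in Hp.
  by have [] := preSP (proj2 (Hl p Hp)).
apply/(psi_simplex Hv); exists x => _ [v Hv' <-].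
move: Hv' => /= /imfsetP [p /= Hp ->]; rewrite inE in Hp.
by have [_ ->] := preSP (proj2 (Hl p Hp)); apply: Hl.
Qed.

Lemma ind_realpt v : D [fset v] -> realpt D (fun w => (w == v)%:R : R).
Proof.
move=> Hv; exists [fset v]; split.
- by [].
- by move=> w; rewrite in_fset1 => /negbTE ->.
- by move=> w; rewrite ler0n.
- by rewrite big_seq_fset1 eqxx.
Qed.

Lemma ind_located v : S [fset v] ->
  located S psi (fun w => (w == v)%:R : R) (psi v).
Proof.
move=> Hv; exists [fset v]; split.
- by [].
- by move=> w; rewrite in_fset1 => /negbTE ->.
- by rewrite big_seq_fset1 eqxx scale1r.
Qed.

Lemma coverage z : exists x : realisation R D, located S psi (sval x) z.
Proof.
have [Hu _ Hh Hvt] := cellLP HB_simp z.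
set L := cellL HB_simp z in Hu Hh Hvt.
have := cell_refl (H:=H) z; rewrite Hh => -[lam [Hl0 [Hls Hz]]].
have HL : forall p, p \in L -> closedcell H z p /\ cox_vertex H p.
  by move=> p /Hvt.
set s := preS @` [fset p in L].
have Hs := S_of_cell HL.
pose q := fun w => \sum_(i < size L) lam i * (preS L`_i == w)%:R.
have HsL : forall i : 'I_(size L), preS L`_i \in s.
  by move=> i; apply/imfsetP; exists L`_i => //=; rewrite inE mem_nth.
have Hq0 : forall w, w \notin s -> q w = 0.
  move=> w Hw; apply: big1 => i _.
  case: eqP => [Hi|_]; last by rewrite mulr0.
  by move: Hw; rewrite -Hi HsL.
have Hrp : realpt D q.
  exists s; split => //; first exact: S_D.
  - by move=> w; apply: sumr_ge0 => i _; apply: mulr_ge0 => //; rewrite ler0n.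
  - rewrite exchange_big /=; transitivity (\sum_(i < size L) lam i); last exact: Hls.
    apply: eq_bigr => i _.
    rewrite (eq_bigr (fun w => (w == preS L`_i)%:R * lam i)).
      by rewrite sum_indR ?HsL.
    by move=> w _; rewrite mulrC eq_sym.
exists (exist _ q Hrp); exists s; split => //=.
rewrite Hz.
under eq_bigr => w _ do rewrite scaler_suml.
rewrite exchange_big /=; apply: eq_bigr => i _.
under eq_bigr => w _ do rewrite -scalerA eq_sym.
rewrite -scaler_sumr sum_ind ?HsL //.
by have [_ ->] := preSP (proj2 (HL _ (mem_nth 0 (ltn_ord i)))).
Qed.

Definition Af (z : 'rV[R]_n) : R := a (projT1 (cid (coverage z))).

Lemma Af_val x z : located S psi (sval x) z -> a x = Af z.
Proof.
move=> Hx; rewrite /Af; set y := projT1 _.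
have Hy : located S psi (sval y) z := projT2 (cid (coverage z)).
have Hx' : located S psi (sval x) (1 *: z + (1 - 1) *: z).
  by rewrite scale1r subrr scale0r addr0.
by rewrite (@Haff S psi HAS Hpsi y y x z z 1 (ltac:(by rewrite ler01 lexx)) Hy Hy Hx') mul1r subrr mul0r addr0.
Qed.

Lemma Af_conv (t : R) z1 z2 : 0 <= t <= 1 ->
  Af (t *: z1 + (1 - t) *: z2) = t * Af z1 + (1 - t) * Af z2.
Proof.
move=> Ht; have [x1 H1] := coverage z1; have [x2 H2] := coverage z2.
have [w Hw] := coverage (t *: z1 + (1 - t) *: z2).
rewrite -(Af_val Hw) -(Af_val H1) -(Af_val H2).
exact: (@Haff S psi HAS Hpsi x1 x2 w z1 z2 t Ht H1 H2 Hw).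
Qed.

Lemma Af_aff : exists (c : R) (g : 'rV[R]_n), forall z, Af z = c + dotv g z.
Proof. by apply: conv_affine => t z1 z2 Ht; apply: Af_conv. Qed.

Definition Cy y : {fset V} := preS @` [fset p in cellL HB_simp y].

Lemma Cy_mem y w : w \in Cy y <-> exists2 p, p \in cellL HB_simp y & w = preS p.
Proof.
split; first by move=> /imfsetP [p /= Hp ->]; rewrite inE in Hp; exists p.
by move=> [p Hp ->]; apply/imfsetP; exists p => //=; rewrite inE.
Qed.

Lemma preS_cell y p : p \in cellL HB_simp y -> cvertex S (preS p) /\ psi (preS p) = p.
Proof. by move=> Hp; apply: preSP; have /cellL_vert [] := Hp. Qed.

Lemma S_Cy y : S (Cy y).
Proof. by apply: (S_of_cell (x := y)) => p /cellL_vert. Qed.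

Lemma card_Cy y : generic H y -> #|` Cy y| = n.+1.
Proof.
move=> Gy; rewrite -(size_cellL HB_arr HB_simp Gy).
have -> : size (cellL HB_simp y) = #|` [fset p in cellL HB_simp y]|.
  by rewrite card_fseq undup_id // cellL_uniq.
apply/eqP/card_in_imfsetP => p q Hp Hq E; rewrite !inE in Hp Hq.
by rewrite -(proj2 (preS_cell Hp)) -(proj2 (preS_cell Hq)) E.
Qed.
End OneApt.

Lemma imfset_1 (f : V -> V) (v : V) : f @` [fset v] = [fset f v].
Proof.
apply/fsetP => x; rewrite in_fset1; apply/imfsetP/eqP.
  by move=> [w /= /fset1P -> ->].
by move=> ->; exists v => //=; rewrite in_fset1.
Qed.

Lemma cx_vert (S1 S2 : set {fset V}) (f : V -> V) (v : V) : cx_iso S1 S2 f -> cvertex S1 v -> cvertex S2 (f v).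
Proof.
move=> [_ _ Hc] Hv.
have Hs : forall w, w \in [fset v] -> cvertex S1 w.
  by move=> w; rewrite in_fset1 => /eqP ->.
by have := (Hc [fset v] Hs).1 Hv; rewrite imfset_1.
Qed.

Lemma cox_iso_comp (S1 S2 : set {fset V}) (f : V -> V) (psi : V -> 'rV[R]_n) : cx_iso S1 S2 f -> cox_iso H S2 psi ->
  cox_iso H S1 (psi \o f).
Proof.
move=> Hf Hp; have [Hf1 Hf2 Hf3] := Hf; have [Hp1 Hp2 Hp3] := Hp.
split.
- move=> v w Hv Hw /= E; apply: Hf1 => //.
  by apply: Hp1 => //; apply: (cx_vert Hf).
- move=> z Hz; have [v [Hv <-]] := Hp2 z Hz.
  by have [v1 [Hv1 <-]] := Hf2 v Hv; exists v1.
- move=> s Hs; rewrite (Hf3 s Hs).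
  have Hs' : forall v, v \in f @` s -> cvertex S2 v.
    by move=> v /imfsetP [w /= Hw ->]; apply: (cx_vert Hf); apply: Hs.
  rewrite (Hp3 _ Hs').
  have -> : (psi @` [set v | v \in (f @` s)%fset])%classic = ((psi \o f) @` [set v | v \in s])%classic.
    apply/funext => z; apply/propext; split.
      by move=> [v /= /imfsetP [w /= Hw ->] <-]; exists w.
    by move=> [w /= Hw <-]; exists (f w) => //=; apply/imfsetP; exists w.
  by [].
Qed.

Lemma D_card (T : {fset V}) : D T -> (#|` T| <= n.+1)%N.
Proof.
move=> HT; have [S2 [HA2 HT2 _]] := HB_two HT HT.
have [_ _ [psi2 Hpsi2]] := HB_app HA2.
have [y [Gy Hy]] := S_gen HA2 Hpsi2 HT2.
rewrite -(size_cellL HB_arr HB_simp Gy).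
have -> : #|` T| = #|` psi2 @` T|.
  apply/esym/eqP/card_in_imfsetP => v w Hv Hw E.
  by apply: (psi_inj Hpsi2) => //; apply: (S_vert HA2 HT2).
have -> : size (cellL HB_simp y) = #|` [fset p in cellL HB_simp y]|.
  by rewrite card_fseq undup_id // cellL_uniq.
apply: fsubset_leq_card; apply/fsubsetP => p /imfsetP [v /= Hv ->].
by rewrite inE; apply: Hy.
Qed.

Lemma chamber_Cy (S : set {fset V}) (psi : V -> 'rV[R]_n) y : A S -> cox_iso H S psi -> generic H y ->
  chamber D (Cy S psi y).
Proof.
move=> HAS Hpsi Gy; split; first exact: (S_D HAS (S_Cy Hpsi y)).
move=> T HT Hsub; apply/eqP; rewrite eq_sym eqEfcard Hsub /=.
by rewrite (card_Cy Hpsi Gy) D_card.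
Qed.

Hypothesis Hthick : thick D.
Hypothesis Hn : (0 < n)%N.

Lemma refl_facet y i0 h p : generic H y -> (i0 < size (cellL HB_simp y))%N -> H h ->
  (forall j, (j < size (cellL HB_simp y))%N -> j != i0 -> side h (cellL HB_simp y)`_j = 0) ->
  p \in cellL HB_simp (refl h y) -> p != refl h (cellL HB_simp y)`_i0 ->
  exists m, [/\ (m < size (cellL HB_simp y))%N, m != i0 & (cellL HB_simp y)`_m = p].
Proof.
move=> Gy Hi0 Hh Hf Hp Hne.
have Hnz := HA_nz HB_arr Hh.
set L := cellL HB_simp y in Hi0 Hf Hne *.
have HpL : refl h p \in L by move: Hp; rewrite (refl_cellL HB_arr HB_simp _ _ Hh).
set m := index (refl h p) L.
have Hm : (m < size L)%N by rewrite index_mem.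
have HLm : L`_m = refl h p by rewrite nth_index.
have Hm0 : m != i0.
  apply/negP => /eqP Hmi; move: Hne; rewrite -Hmi HLm refl_invol //.
  by rewrite eqxx.
have Hsm := Hf m Hm Hm0.
exists m; split => //; rewrite HLm.
have : side h (refl h p) = 0 by rewrite -HLm.
rewrite side_refl // => /eqP; rewrite oppr_eq0 => /eqP Hs0.
by rewrite refl_fix.
Qed.

Lemma delta_exists v : D [fset v] ->
  exists x : realisation R D, sval x = (fun w => (w == v)%:R).
Proof. by move=> Hv; exists (exist _ _ (ind_realpt Hv)). Qed.

Lemma Af_vertex (S : set {fset V}) (psi : V -> 'rV[R]_n) (HAS : A S)
  (Hpsi : cox_iso H S psi) v x : S [fset v] -> sval x = (fun w => (w == v)%:R) ->
  a x = Af HAS Hpsi (psi v).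
Proof. by move=> Hv Hx; apply: Af_val; rewrite Hx; apply: ind_located. Qed.

Section Transport.
Variables (S : set {fset V}) (psi : V -> 'rV[R]_n).
Hypothesis HAS : A S.
Hypothesis Hpsi : cox_iso H S psi.

Lemma transport y i0 h (E : {fset V}) e (xe : realisation R D) :
  generic H y -> (i0 < size (cellL HB_simp y))%N -> H h ->
  side h (cellL HB_simp y)`_i0 != 0 ->
  (forall j, (j < size (cellL HB_simp y))%N -> j != i0 -> side h (cellL HB_simp y)`_j = 0) ->
  chamber D E ->
  (forall j, (j < size (cellL HB_simp y))%N -> j != i0 -> preS S psi (cellL HB_simp y)`_j \in E) ->
  E != Cy S psi y -> e \in E ->
  (forall j, (j < size (cellL HB_simp y))%N -> j != i0 -> e != preS S psi (cellL HB_simp y)`_j) ->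
  sval xe = (fun w => (w == e)%:R) ->
  a xe = Af HAS Hpsi (refl h (cellL HB_simp y)`_i0).
Proof.
move=> Gy Hi0 Hh Hs Hf HE HE1 HE3 He HE2 Hxe.
set L := cellL HB_simp y in Hi0 Hs Hf HE1 HE2 *.
set C := Cy S psi y in HE3.
have HC := chamber_Cy HAS Hpsi Gy; rewrite -/C in HC.
have [S1 [HA1 HS1C HS1E]] := HB_two (proj1 HC) (proj1 HE).
have [_ _ [psi1' Hpsi1']] := HB_app HA1.
have [f [Hf' Hfix]] := HB_iso HA1 HAS HC HS1C (S_Cy Hpsi y).
have Hpsi1 := cox_iso_comp Hf' Hpsi.
have HCv : forall p, p \in L -> [/\ preS S psi p \in C, cvertex S1 (preS S psi p),
    cvertex S (preS S psi p), f (preS S psi p) = preS S psi p & psi (preS S psi p) = p].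
  move=> p Hp; have HpC : preS S psi p \in C by apply/Cy_mem; exists p.
  have H1 := S_vert HA1 HS1C HpC; have H2 := S_vert HAS (S_Cy Hpsi y) HpC.
  by split => //; [apply: Hfix|have [] := preS_cell Hpsi Hp].
have Heq : forall z, Af HA1 Hpsi1 z = Af HAS Hpsi z.
  have [c1 [g1 E1]] := Af_aff HA1 Hpsi1.
  have [c [g E0]] := Af_aff HAS Hpsi.
  have Hv : forall p, p \in L -> dotv (g1 - g) p - (c - c1) = 0.
    move=> p Hp; have [HpC H1 H2 H3 H4] := HCv p Hp.
    have HDv : D [fset preS S psi p] by apply: (S_D HAS); apply: H2.
    have [x Hx] := delta_exists HDv.
    have Hx1 := Af_vertex HA1 Hpsi1 H1 Hx; rewrite /= H3 H4 E1 in Hx1.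
    have Hx2 := Af_vertex HAS Hpsi H2 Hx; rewrite H4 E0 in Hx2.
    rewrite dotvBl; lra.
  move=> z; have := aff_vanish HB_arr Gy Hv z.
  by rewrite E1 E0 dotvBl => HH; lra.
have HEv : forall w, w \in E -> cvertex S1 w.
  move=> w Hw. exact: (S_vert HA1 HS1E Hw).
have HfE : S (f @` E) by have [_ _ H3] := Hf'; apply/(H3 E HEv).
have [y' [Gy' Hy']] := S_gen HAS Hpsi HfE.
have Hc : forall j, (j < size L)%N -> j != i0 -> closedcell H y' L`_j.
  move=> j Hj Hji; have [HpC H1 H2 H3 H4] := HCv _ (mem_nth 0 Hj).
  rewrite -H4 -H3; apply: (cellL_in (HS := HB_simp)); apply: Hy'.
  by apply/imfsetP; exists (preS S psi L`_j) => //; apply: HE1.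
have Hfe : psi (f e) \in cellL HB_simp y'.
  by apply: Hy'; apply/imfsetP; exists e.
have Hfev : cvertex S (f e) by apply: (cx_vert Hf'); apply: HEv.
have Hfinj : forall w, cvertex S1 w -> f e = f w -> e = w.
  by move=> w Hw E0; have [H1 _ _] := Hf'; apply: H1 => //; apply: HEv.
have Hnot : forall j, (j < size L)%N -> j != i0 -> psi (f e) != L`_j.
  move=> j Hj Hji; apply/negP => /eqP Hpj.
  have [HpC H1 H2 H3 H4] := HCv _ (mem_nth 0 Hj).
  have Hfe' : f e = preS S psi L`_j by rewrite -Hpj preS_psi.
  have := Hfinj _ H1; rewrite H3 => /(_ Hfe') Hej.
  by move: (HE2 j Hj Hji); rewrite Hej eqxx.
have Hxe' : a xe = Af HAS Hpsi (psi (f e)).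
  rewrite -Heq; apply: (Af_vertex HA1 Hpsi1 _ Hxe).
  by apply: (S_cx HA1 HS1E); rewrite fsub1set.
rewrite Hxe'; congr (Af _ _ _).
have [Hl|Hr] := at2 HB_arr Hn Gy Hi0 Hh Hs Hf Gy' Hc.
- exfalso.
  have HfeL : psi (f e) \in L.
    have [Hc1 Hv1] := (cellL_vert HB_simp y' (psi (f e))).2 Hfe.
    by apply/(cellL_vert HB_simp); rewrite -Hl; split.
  set j := index (psi (f e)) L.
  have Hj : (j < size L)%N by rewrite index_mem.
  have HLj : L`_j = psi (f e) by rewrite nth_index.
  have [Hji|Hji] := eqVneq j i0; last by move: (Hnot j Hj Hji); rewrite HLj eqxx.
  have [HpC H1 H2 H3 H4] := HCv _ (mem_nth 0 Hi0).
  have He0 : e = preS S psi L`_i0.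
    by apply: Hfinj => //; rewrite H3 -Hji HLj preS_psi.
  have HCE : C `<=` E.
    apply/fsubsetP => w /Cy_mem [p Hp ->].
    set m := index p L.
    have Hm : (m < size L)%N by rewrite index_mem.
    have -> : p = L`_m by rewrite nth_index.
    have [Hmi|Hmi] := eqVneq m i0; first by rewrite Hmi -He0.
    exact: HE1.
  have [_ Hmax] := HC.
  by move: HE3; rewrite (Hmax E (proj1 HE) HCE) eqxx.
- have Hfe2 : psi (f e) \in cellL HB_simp (refl h y).
    have [Hc1 Hv1] := (cellL_vert HB_simp y' (psi (f e))).2 Hfe.
    by apply/(cellL_vert HB_simp); rewrite -Hr; split.
  apply/eqP; apply/negP => Hne.
  have [m [Hm Hmi HLm]] := refl_facet Gy Hi0 Hh Hf Hfe2 (introN idP Hne).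
  by move: (Hnot m Hm Hmi); rewrite HLm eqxx.
Qed.
End Transport.

Lemma key (S : set {fset V}) (psi : V -> 'rV[R]_n) (HAS : A S) (Hpsi : cox_iso H S psi)
  y i0 h : generic H y -> (i0 < size (cellL HB_simp y))%N -> H h ->
  side h (cellL HB_simp y)`_i0 != 0 ->
  (forall j, (j < size (cellL HB_simp y))%N -> j != i0 -> side h (cellL HB_simp y)`_j = 0) ->
  Af HAS Hpsi (cellL HB_simp y)`_i0 = Af HAS Hpsi (refl h (cellL HB_simp y)`_i0).
Proof.
move=> Gy Hi0 Hh Hs Hf.
have Hnz := HA_nz HB_arr Hh.
set L := cellL HB_simp y in Hi0 Hs Hf *.
set C := Cy S psi y.
set v := preS S psi L`_i0.
have HLC : forall j, (j < size L)%N -> preS S psi L`_j \in C /\ psi (preS S psi L`_j) = L`_j.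
  move=> j Hj; split; first by apply/Cy_mem; exists L`_j => //; rewrite mem_nth.
  by have [] := preS_cell Hpsi (mem_nth 0 Hj).
have Hpinj : forall j m, (j < size L)%N -> (m < size L)%N ->
    preS S psi L`_j = preS S psi L`_m -> j = m.
  move=> j m Hj Hm E; have [_ E1] := HLC j Hj; have [_ E2] := HLC m Hm.
  by apply/eqP; rewrite -(nth_uniq 0 Hj Hm (cellL_uniq _ _)) -E1 -E2 E.
set P := C `\ v.
have HPmem : forall j, (j < size L)%N -> j != i0 -> preS S psi L`_j \in P.
  move=> j Hj Hji; apply/fsetD1P; split; last by have [] := HLC j Hj.
  by apply/negP => /eqP /(Hpinj _ _ Hj Hi0) /eqP; rewrite (negbTE Hji).
have HPC : P `<=` C by apply/fsubsetP => w /fsetD1P [].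
have HC := chamber_Cy HAS Hpsi Gy; rewrite -/C in HC.
have HvC : v \in C by have [] := HLC i0 Hi0.
have Hpanel : panel D P.
  split; first by apply: HB_cx (proj1 HC) HPC.
  exists C; split => //.
  by rewrite (cardfsD1 v C) HvC.
have [E1 [E2 [E3 [HE1 HE2 HE3 [HP1 [HP2 HP3]] [N12 N13 N23]]]]] := Hthick Hpanel.
set C' := Cy S psi (refl h y).
have [E [HE HPE HEC HEC']] : exists E, [/\ chamber D E, P `<=` E, E != C & E != C'].
  have [A1|A1] := eqVneq E1 C; have [B1|B1] := eqVneq E1 C';
  have [A2|A2] := eqVneq E2 C; have [B2|B2] := eqVneq E2 C';
  try by [exists E1 | exists E2];
  try by [move: N12; rewrite ?A1 ?B1 ?A2 ?B2 eqxx];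
  exists E3; split => //; apply/negP => /eqP E3eq;
  by [move: N13; rewrite ?A1 ?B1 E3eq eqxx | move: N23; rewrite ?A2 ?B2 E3eq eqxx |
      move: N13; rewrite A1 -B1 E3eq eqxx | move: N23; rewrite A2 -B2 E3eq eqxx].
have [e [He HeP]] : exists e, e \in E /\ e \notin P.
  have [//|Hno] := pselect (exists e, e \in E /\ e \notin P).
  exfalso; have HEP : E `<=` P.
    apply/fsubsetP => w Hw; apply/negP => Hn'; apply: Hno; exists w; split => //.
    exact/negP.
  have [_ Hmax] := HE; move: HEC.
  by rewrite -(Hmax C (proj1 HC) (fsubset_trans HEP HPC)) eqxx.
have HDe : D [fset e] by apply: HB_cx (proj1 HE) _; rewrite fsub1set.
have [xe Hxe] := delta_exists HDe.
have HE2' : forall j, (j < size L)%N -> j != i0 -> e != preS S psi L`_j.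
  move=> j Hj Hji; apply/negP => /eqP Hej; move: HeP; rewrite Hej HPmem //.
have T1 := transport HAS Hpsi Gy Hi0 Hh Hs Hf HE
  (fun j Hj Hji => (fsubsetP HPE) _ (HPmem j Hj Hji)) HEC He HE2' Hxe.
have Gy2 := refl_generic HB_arr Hh Gy.
set L' := cellL HB_simp (refl h y).
have HiL : refl h L`_i0 \in L'.
  by rewrite /L' (refl_cellL HB_arr HB_simp _ _ Hh) refl_invol // mem_nth.
set i1 := index (refl h L`_i0) L'.
have Hi1 : (i1 < size L')%N by rewrite index_mem.
have HL'i1 : L'`_i1 = refl h L`_i0 by rewrite nth_index.
have Hfac : forall j, (j < size L')%N -> j != i1 ->
    exists m, [/\ (m < size L)%N, m != i0 & L`_m = L'`_j].
  move=> j Hj Hji; apply: (refl_facet Gy Hi0 Hh Hf (mem_nth 0 Hj)).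
  rewrite -HL'i1; apply/negP => /eqP E0.
  by move: Hji; rewrite -(nth_uniq 0 Hj Hi1 (cellL_uniq _ _)) E0 eqxx.
have T2 := transport HAS Hpsi Gy2 Hi1 Hh
  (ltac:(by rewrite HL'i1 side_refl // oppr_eq0))
  (fun j Hj Hji => ltac:(have [m [Hm Hmi <-]] := Hfac j Hj Hji; exact: Hf))
  HE
  (fun j Hj Hji => ltac:(have [m [Hm Hmi <-]] := Hfac j Hj Hji;
                         exact: (fsubsetP HPE) _ (HPmem m Hm Hmi)))
  HEC' He
  (fun j Hj Hji => ltac:(have [m [Hm Hmi <-]] := Hfac j Hj Hji; exact: HE2'))
  Hxe.
by rewrite -T1 T2 HL'i1 refl_invol.
Qed.

Lemma const (S : set {fset V}) (psi : V -> 'rV[R]_n) (HAS : A S) (Hpsi : cox_iso H S psi)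
  z1 z2 : Af HAS Hpsi z1 = Af HAS Hpsi z2.
Proof.
have [c [g Eg]] := Af_aff HAS Hpsi.
suff g0 : g = 0 by rewrite !Eg g0 !dotv0l.
have [y [Gy _]] := gen HB_arr 0.
set L := cellL HB_simp y.
have HsL : size L = n.+1 := size_cellL HB_arr HB_simp Gy.
have Hperp : forall j, (j < size L)%N -> exists h, [/\ H h, side h L`_j != 0,
    (forall m, (m < size L)%N -> m != j -> side h L`_m = 0) & dotv g h.1 = 0].
  move=> j Hj.
  have [h [Hh Hs Hf]] := facet_wall HB_arr Hn Gy Hj.
  exists h; split => //.
  have Hk := key HAS Hpsi Gy Hj Hh Hs Hf.
  rewrite !Eg in Hk.
  have Hnz := HA_nz HB_arr Hh.
  have Hd := dotv_neq0 Hnz.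
  move: Hk; rewrite /refl dotvBr dotvZr => Hk.
  have : (2 * side h L`_j / dotv h.1 h.1) * dotv g h.1 = 0 by lra.
  move/eqP; rewrite mulf_eq0 => /orP [|/eqP //].
  by rewrite mulf_eq0 invr_eq0 (negbTE Hd) orbF mulf_eq0 (negbTE Hs) pnatr_eq0.
have H0 : (0 < size L)%N by rewrite HsL.
have [bet [Hbs Hbz]] := span_cell HB_arr HB_simp Gy (L`_0 + g).
rewrite -/L in Hbs Hbz.
have Hbj : forall j, (j < size L)%N -> bet j = (j == 0%N)%:R.
  move=> j Hj; have [h [Hh Hs Hf Hg]] := Hperp j Hj.
  have E1 : side h (L`_0 + g) = side h L`_0.
    by rewrite /side dotvDr (dotvC h.1 g) Hg addr0.
  have E2 : side h (L`_0 + g) = bet j * side h L`_j.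
    rewrite Hbz side_comb // (bigD1 (Ordinal Hj)) //= big1 ?addr0 //.
    by move=> m /negbTE; rewrite -val_eqE /= => Hmj; rewrite Hf ?Hmj ?mulr0.
  have [Hj0|Hj0] := eqVneq j 0%N.
    subst j; apply: (mulIf Hs); by rewrite -E2 E1 mul1r.
  move: E2; rewrite E1 Hf // 1?eq_sym //.
  by move/eqP; rewrite eq_sym mulf_eq0 (negbTE Hs) orbF => /eqP.
have : L`_0 + g = L`_0.
  rewrite Hbz (bigD1 (Ordinal H0)) //= Hbj // eqxx scale1r big1 ?addr0 //.
  by move=> m /negbTE; rewrite -val_eqE /= => Hm; rewrite Hbj // Hm scale0r.
by move=> E0; have := congr1 (fun w => w - L`_0) E0; rewrite addrC addKr subrr.
Qed.
End Apt.

End Helpers.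

Theorem mainTheorem8 (R : realType) (n : nat) (V : choiceType)
  (H : set ('rV[R]_n * R)) (D : set {fset V}) (A : set (set {fset V})) :
  euclidean_building H D A -> thick D ->
  forall a : realisation R D -> R, affine_functional H A a ->
  forall x y : realisation R D, a x = a y.
Proof.
move=> HB Hth a Haff x y.
have [sx [Dsx Hsx0 _ Hsx1]] := proj2_sig x.
have [sy [Dsy Hsy0 _ Hsy1]] := proj2_sig y.
have [v0 _] : exists v0 : V, v0 \in sx.
  case Ex: (enum_fset sx) Hsx1 => [|v0 l]; first by rewrite big_nil => /eqP; rewrite eq_sym GRing.oner_eq0.
  by move=> _; exists v0; rewrite -[_ \in _]/(v0 \in enum_fset sx) Ex mem_head.
have [S [HAS Hsx Hsy]] := HB_two HB Dsx Dsy.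
have [_ _ [psi Hpsi]] := HB_app HB HAS.
have Lx : located S psi (sval x) (\sum_(v <- sx) sval x v *: psi v)%R by exists sx.
have Ly : located S psi (sval y) (\sum_(v <- sy) sval y v *: psi v)%R by exists sy.
rewrite (Af_val HB Haff v0 HAS Hpsi Lx) (Af_val HB Haff v0 HAS Hpsi Ly).
case: n H D A HB Hth a Haff x y sx sy Dsx Hsx0 Hsx1 Dsy Hsy0 Hsy1 S HAS Hsx Hsy psi Hpsi Lx Ly => [|n'] H D A HB Hth a Haff x y sx sy Dsx Hsx0 Hsx1 Dsy Hsy0 Hsy1 S HAS Hsx Hsy psi Hpsi Lx Ly.
  by congr (Af _ _ _ _ _ _); apply/matrixP => i [].
exact: const.
Qed.
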